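(* Let $n\ge 118$ be an integer and let $k$ be real with $\frac{n-10}{2}-\sqrt n<k<\frac{n-10}{2}+\sqrt n$. Set $p=1+\frac8k$ and $q=\frac{n-8}{2}$. Then $pJ_1-q_1>0$, where $$-J_1=k(k+2-n)(k+4)(k+6-n)(k+6)(k+8-n)+(k+2)(k+4-n)(k+4)(k+6-n)(k+6)(k+8-n)+k(k+2-n)(k+2)(k+4-n)(k+6)(k+8-n)+k(k+2-n)(k+2)(k+4-n)(k+4)(k+6-n),$$ $$q_1=2\big((q+2)(n-q-4)+q(n-q-2)\big)\,q(q+2-n)(q+2)(q+4-n).$$
   Context: Here $k=\frac{8}{p-1}$ corresponds to the homogeneity degree of solutions of $\Delta^4u=|u|^{p-1}u$; the claim is a purely algebraic inequality in the real variable $k$ and the integer $n$. *)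

(* Defs.v *)
From Stdlib Require Import Reals.
Open Scope R_scope.

Definition minusJ1 (n k : R) : R :=
  k*(k+2-n)*(k+4)*(k+6-n)*(k+6)*(k+8-n)
  + (k+2)*(k+4-n)*(k+4)*(k+6-n)*(k+6)*(k+8-n)
  + k*(k+2-n)*(k+2)*(k+4-n)*(k+6)*(k+8-n)
  + k*(k+2-n)*(k+2)*(k+4-n)*(k+4)*(k+6-n).

Definition J1 (n k : R) : R := - minusJ1 n k.

Definition q1 (n q : R) : R :=
  2 * ((q+2)*(n-q-4) + q*(n-q-2)) * q*(q+2-n)*(q+2)*(q+4-n).

(* Main.v *)
Require Import Defs.
From Stdlib Require Import Reals Lra Psatz.
Open Scope R_scope.

Lemma odd_bd (u a : R) : -1 <= u <= 1 -> 0 <= a <= 1 -> -1 <= u * a <= 1.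
Proof. intros; split; nra. Qed.

Lemma key (s u : R) : 10 <= s -> -1 <= u <= 1 ->
  let n := s^2 in let k := (n - 10)/2 + s*u in
  (k+8) * J1 n k - k * q1 n ((n-8)/2) > 0.
Proof.
  intros Hs Hu n k.
  set (c12 := 1/2 - 3/8*u^2).
  set (c11 := 3/4*u - 3/4*u^3).
  set (c10 := -51/8 + 9/4*u^2 + 3/2*u^4).
  set (c9 := -9/4*u + 3*u^5).
  set (c8 := 3/4 + 11*u^2 - 9*u^4 - 2*u^6).
  set (c7 := -28*u - 2*u^3 - 4*u^7).
  set (c6 := 351/2 - 10*u^2 - 2*u^4 + 12*u^6).
  set (c5 := 47*u + 32*u^3 + 44*u^5).
  set (c4 := -157 - 150*u^2 - 132*u^4).
  set (c3 := 224*u - 76*u^3).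
  set (c2 := -1126 + 228*u^2).
  set (c1 := 36*u).
  assert (E : (k+8) * J1 n k - k * q1 n ((n-8)/2) =
    s^11 * (s*c12 + c11) + s^10*c10 + s^9*c9 + s^8*c8 + s^7*c7 + s^6*c6
    + s^5*c5 + s^4*c4 + s^3*c3 + s^2*c2 + s*c1 - 108).
  { unfold k, n, J1, minusJ1, q1, c12, c11, c10, c9, c8, c7, c6, c5, c4, c3, c2, c1.
    field. }
  rewrite E; clear E.
  set (a := u^2).
  assert (Ha : 0 <= a <= 1) by (unfold a; split; nra).
  assert (Ha2 : 0 <= a^2 <= 1) by (split; nra).
  assert (Ha3 : 0 <= a^3 <= 1) by (split; nra).
  assert (U3 : u^3 = u*a) by (unfold a; ring).
  assert (U5 : u^5 = u*a^2) by (unfold a; ring).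
  assert (U7 : u^7 = u*a^3) by (unfold a; ring).
  assert (U4 : u^4 = a^2) by (unfold a; ring).
  assert (U6 : u^6 = a^3) by (unfold a; ring).
  pose proof (odd_bd u a Hu Ha) as B1.
  pose proof (odd_bd u (a^2) Hu Ha2) as B2.
  pose proof (odd_bd u (a^3) Hu Ha3) as B3.
  assert (H11 : s*c12 + c11 >= s/8).
  { unfold c12, c11. rewrite U3. fold a.
    assert (0 <= (1 - a) * (3*s/8 + 3*u/4)) by (apply Rmult_le_pos; lra).
    nra. }
  assert (H10 : c10 >= -7) by (unfold c10; rewrite U4; fold a; nra).
  assert (H9 : c9 >= -6) by (unfold c9; rewrite U5; lra).
  assert (H8 : c8 >= -11) by (unfold c8; rewrite U4, U6; fold a; lra).
  assert (H7 : c7 >= -34) by (unfold c7; rewrite U3, U7; lra).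
  assert (H6 : c6 >= 0) by (unfold c6; rewrite U4, U6; fold a; lra).
  assert (H5 : c5 >= -123) by (unfold c5; rewrite U3, U5; lra).
  assert (H4 : c4 >= -439) by (unfold c4; rewrite U4; fold a; lra).
  assert (H3 : c3 >= -300) by (unfold c3; rewrite U3; lra).
  assert (H2 : c2 >= -1126) by (unfold c2; fold a; lra).
  assert (H1 : c1 >= -36) by (unfold c1; lra).
  assert (P : forall j, 0 <= s^j) by (intro; apply pow_le; lra).
  assert (M : forall j c B, c >= B -> s^j * c >= s^j * B).
  { intros j c B HB. apply Rle_ge, Rmult_le_compat_l; [apply P|lra]. }
  pose proof (M 11%nat _ _ H11). pose proof (M 10%nat _ _ H10). pose proof (M 9%nat _ _ H9).
  pose proof (M 8%nat _ _ H8). pose proof (M 7%nat _ _ H7). pose proof (M 6%nat _ _ H6).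
  pose proof (M 5%nat _ _ H5). pose proof (M 4%nat _ _ H4). pose proof (M 3%nat _ _ H3).
  pose proof (M 2%nat _ _ H2). pose proof (M 1%nat _ _ H1).
  set (x := s^10).
  assert (Hx : x > 0) by (unfold x; apply pow_lt; lra).
  assert (L : forall j, (j <= 10)%nat -> s^j * 10^(10-j) <= x).
  { intros j Hj. unfold x.
    replace (s^10) with (s^j * s^(10-j)) by (rewrite <- pow_add; f_equal; lia). apply Rmult_le_compat_l; [apply P|].
    apply pow_incr; lra. }
  pose proof (L 9%nat ltac:(lia)). pose proof (L 8%nat ltac:(lia)). pose proof (L 7%nat ltac:(lia)).
  pose proof (L 5%nat ltac:(lia)). pose proof (L 4%nat ltac:(lia)). pose proof (L 3%nat ltac:(lia)).
  pose proof (L 2%nat ltac:(lia)). pose proof (L 1%nat ltac:(lia)). pose proof (L 0%nat ltac:(lia)).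
  simpl (10 - _)%nat in *.
  assert (S12 : s^11 * (s/8) = x * (s^2/8)) by (unfold x; field).
  assert (s^2 >= 100) by nra.
  assert (x * (s^2/8) >= x * (100/8)) by (apply Rle_ge, Rmult_le_compat_l; lra).
  simpl pow in *. nra.
Qed.

Theorem lemma8p2 (n : nat) (k : R) :
  (118 <= n)%nat ->
  (INR n - 10) / 2 - sqrt (INR n) < k < (INR n - 10) / 2 + sqrt (INR n) ->
  let p := 1 + 8 / k in
  let q := (INR n - 8) / 2 in
  p * J1 (INR n) k - q1 (INR n) q > 0.
Proof.
  intros Hn Hk p q.
  assert (HN : 118 <= INR n) by (apply le_INR in Hn; simpl in Hn; lra).
  set (s := sqrt (INR n)) in *.
  assert (Hs2 : s * s = INR n) by (apply sqrt_sqrt; lra).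
  assert (Hs : 10 <= s).
  { destruct (Rle_or_lt 10 s) as [h|h]; [exact h|].
    assert (0 <= s) by apply sqrt_pos. nra. }
  set (u := (k - (INR n - 10)/2) / s).
  assert (Hu : -1 <= u <= 1).
  { unfold u; split.
    - apply Rmult_le_reg_r with s; [lra|]. unfold Rdiv; rewrite Rmult_assoc, Rinv_l; lra.
    - apply Rmult_le_reg_r with s; [lra|]. unfold Rdiv; rewrite Rmult_assoc, Rinv_l; lra. }
  pose proof (key s u Hs Hu) as K. cbv zeta in K.
  assert (En : s^2 = INR n) by (simpl; lra).
  assert (Ek : (s^2 - 10)/2 + s*u = k) by (rewrite En; unfold u; field; lra).
  rewrite Ek, En in K.
  assert (kpos : k > 0) by nra.
  unfold p, q.
  replace ((1 + 8 / k) * J1 (INR n) k - q1 (INR n) ((INR n - 8) / 2))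
    with (((k + 8) * J1 (INR n) k - k * q1 (INR n) ((INR n - 8) / 2)) / k)
    by (field; lra).
  apply Rlt_gt, Rdiv_lt_0_compat; lra.
Qed.
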